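(* Let $D_G$ be a weighted oriented graph on vertex set $\{x_1,\ldots,x_n\}$ and $I=I(D_G)$. Construct the simple graph $G^D$ with vertex set $\{x_{1,1},\ldots,x_{n,1}\}\cup\{x_{k,2},\ldots,x_{k,w(k)} : x_k \text{ is not a sink and } w(k)\ne 1\}$ and edge set $E(G^D)=\bigcup_{(x_i,x_j)\in E(D_G)}\{\{x_{i,1},x_{j,1}\},\{x_{i,2},x_{j,1}\},\ldots,\{x_{i,w(i)},x_{j,1}\}\}$. Then $(I^{\vee}(\mathrm{pol}))^{\vee}=I(G^D)$.
   Context: A weighted oriented graph $D_G$ with underlying simple graph $G$ is an orientation of the edges with weights $w(k)=w(x_k)\in\mathbb{Z}_{>0}$; $(x_i,x_j)$ denotes an edge oriented from $x_i$ to $x_j$; a sink is a vertex all of whose edges point towards it; sources have weight $1$ by convention. $I(D_G)=\langle x_ix_j^{w(j)}:(x_i,x_j)\in E(D_G)\rangle\subseteq A=K[x_1,\ldots,x_n]$; for a simple graph $G'$, $I(G')$ is the usual squarefree edge ideal. Alexander dual (Miller): for $\mathbf b\in\mathbb N^n$ let $\mathbf m^{\mathbf b}=\langle x_i^{b_i}: b_i\ge1\rangle$; every monomial ideal $I$ is an irredundant intersection of such irreducible ideals, forming the set $\mathrm{Irr}(I)$. Let $\mathbf a_I$ be the exponent vector of the lcm of the minimal generators of $I$. For $\mathbf 0\preceq\mathbf b\preceq\mathbf a$, $\mathbf b^{\mathbf a}$ has $i$-th coordinate $a_i+1-b_i$ if $b_i\ge1$ and $0$ otherwise. Then $I^{\vee}=\langle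 \mathbf x^{\mathbf b^{\mathbf a_I}} : \mathbf m^{\mathbf b}\in\mathrm{Irr}(I)\rangle$; for squarefree ideals this is the usual Alexander dual. Polarization: $x_i^{a}(\mathrm{pol})=\prod_{j=1}^{a}x_{i,j}$, $\mathbf x^{\mathbf a}(\mathrm{pol})=\prod_i x_i^{a_i}(\mathrm{pol})$, and for a monomial ideal $I$ with minimal generators $\mathbf x^{\mathbf a_1},\ldots,\mathbf x^{\mathbf a_m}$, $I(\mathrm{pol})=\langle\mathbf x^{\mathbf a_1}(\mathrm{pol}),\ldots,\mathbf x^{\mathbf a_m}(\mathrm{pol})\rangle$ in $K[x_{i,j}:1\le i\le n,1\le j\le r_i]$, $r_i$ the exponent of $x_i$ in the lcm of the generators. *)

(* Defs.v *)
(* Monomial ideals are modelled combinatorially by finite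
   lists of generating monomials (exponent vectors). *)
From Stdlib Require Import ClassicalEpsilon.
From mathcomp Require Import all_boot.
Set Implicit Arguments. Unset Strict Implicit. Unset Printing Implicit Defensive.

Section Monomials.
Variable V : finType.

Definition mono := {ffun V -> nat}.

Definition dvdm (g m : mono) : bool := [forall v, g v <= m v].

Definition mideal := mono -> Prop.

Definition gen (gs : seq mono) : mideal := fun m => has (fun g => dvdm g m) gs.

Definition same_ideal (I J : mideal) : Prop := forall m, I m <-> J m.

Definition mingens (gs : seq mono) : seq mono :=
  [seq g <- gs | ~~ has (fun h => dvdm h g && (h != g)) gs].

Definition lcmm (gs : seq mono) : mono := [ffun v => \max_(g <- gs) g v].

Definition aI (gs : seq mono) : mono := lcmm (mingens gs).

(* membership in the irreducible ideal m^b = < x_i^{b_i} : b_i >= 1 > *)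
Definition mirr (b : mono) (m : mono) : bool := [exists v, (0 < b v) && (b v <= m v)].

Definition irr_inter (S : seq mono) : mideal := fun m => all (fun b => mirr b m) S.

Definition is_Irr (I : mideal) (S : seq mono) : Prop :=
  same_ideal I (irr_inter S) /\
  (forall b, b \in S -> ~ same_ideal I (irr_inter (rem b S))).

(* Irr(I) (chosen; it exists and is unique up to order) *)
Definition Irr (I : mideal) : seq mono :=
  epsilon (inhabits [::]) (is_Irr I).

Definition bdual (a b : mono) : mono :=
  [ffun v => if 0 < b v then a v + 1 - b v else 0].

(* Miller's Alexander dual, as a list of generators *)
Definition dual (gs : seq mono) : seq mono :=
  [seq bdual (aI gs) b | b <- Irr (gen gs)].

End Monomials.

(* Polarization: the variable x_{i,j} (1 <= j) is encoded as (i, j-1) in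
   'I_n * 'I_N, where N is an upper bound for all the r_i. *)
Definition polm (n N : nat) (m : mono 'I_n) : mono ('I_n * 'I_N)%type :=
  [ffun p : ('I_n * 'I_N)%type => nat_of_bool (p.2 < m p.1)].

Definition pol (n N : nat) (gs : seq (mono 'I_n)) : seq (mono ('I_n * 'I_N)%type) :=
  [seq polm N g | g <- mingens gs].

(* Weighted oriented graphs on {x_1..x_n}: arc i j means (x_i, x_j) is an edge *)
Definition is_source (n : nat) (arc : rel 'I_n) (i : 'I_n) : Prop :=
  (exists j, arc i j) /\ (forall j, ~~ arc j i).

Definition arcs (n : nat) (arc : rel 'I_n) : seq ('I_n * 'I_n)%type :=
  enum [pred p : ('I_n * 'I_n)%type | arc p.1 p.2].

Definition edge_mono (n : nat) (w : 'I_n -> nat) (i j : 'I_n) : mono 'I_n :=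
  [ffun v => ((v == i) : nat) + ((v == j) : nat) * w j].

Definition IDG (n : nat) (arc : rel 'I_n) (w : 'I_n -> nat) : seq (mono 'I_n) :=
  [seq edge_mono w p.1 p.2 | p <- arcs arc].

Definition gd_edge (n N : nat) (i j : 'I_n) (l : nat) : mono ('I_n * 'I_N)%type :=
  [ffun p : ('I_n * 'I_N)%type =>
     nat_of_bool (((p.1 == i) && (p.2 == l.-1 :> nat)) || ((p.1 == j) && (p.2 == 0 :> nat)))].

Definition IGD (n N : nat) (arc : rel 'I_n) (w : 'I_n -> nat) : seq (mono ('I_n * 'I_N)%type) :=
  flatten [seq [seq gd_edge N p.1 p.2 l | l <- iota 1 (w p.1)] | p <- arcs arc].

(* Main.v *)
Require Import Defs.
From mathcomp Require Import all_boot.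
From Stdlib Require Import ClassicalEpsilon Classical.
From mathcomp Require Import zify.
Set Implicit Arguments. Unset Strict Implicit. Unset Printing Implicit Defensive.

Section Gen.
Variable V : finType.
Implicit Types (g h m b : mono V) (gs S : seq (mono V)).

Lemma dvdm_trans g h m : dvdm g h -> dvdm h m -> dvdm g m.
Proof.
move=> /forallP H1 /forallP H2; apply/forallP => v.
exact: leq_trans (H1 v) (H2 v).
Qed.

Lemma dvdm_refl g : dvdm g g.
Proof. by apply/forallP. Qed.

Lemma mirr_mono b g m : dvdm g m -> mirr b g -> mirr b m.
Proof.
move=> /forallP H /existsP [v /andP [H1 H2]]; apply/existsP; exists v.
by rewrite H1 (leq_trans H2 (H v)).
Qed.

Lemma mingens_sub gs g : g \in mingens gs -> g \in gs.
Proof. by rewrite mem_filter => /andP []. Qed.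

Definition wt g := \sum_v g v.

Lemma wt_lt g h : dvdm h g -> h != g -> wt h < wt g.
Proof.
move=> /forallP H ne.
have [v lt] : exists v, h v < g v.
  apply/existsP; apply: contraR ne; rewrite negb_exists => /forallP H'.
  apply/eqP/ffunP => v; apply/eqP; rewrite eqn_leq H /=.
  by have := H' v; rewrite -leqNgt.
rewrite /wt (bigD1 v) //= [X in _ < X](bigD1 v) //=.
rewrite -addSn leq_add //; apply: leq_sum => i _; exact: H.
Qed.

Lemma mingens_below gs g : g \in gs -> exists2 h, h \in mingens gs & dvdm h g.
Proof.
move: {2}(wt g) (leqnn (wt g)) => k; elim: k g => [|k IH] g.
- move=> Hw gin; exists g; last exact: dvdm_refl.
  rewrite mem_filter gin andbT; apply/hasPn => h hin; apply/negP => /andP [d ne].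
  by have := wt_lt d ne; rewrite leqn0 in Hw; rewrite (eqP Hw).
- move=> Hw gin.
  case: (boolP (has (fun h => dvdm h g && (h != g)) gs)).
  + move=> /hasP [h hin /andP [d ne]].
    have lt := wt_lt d ne.
    have [h' h'in d'] := IH h (ltnSE (leq_trans lt Hw)) hin.
    by exists h' => //; exact: dvdm_trans d' d.
  + by move=> nh; exists g; [rewrite mem_filter gin nh | exact: dvdm_refl].
Qed.

Lemma lcmm_ge gs g v : g \in gs -> g v <= lcmm gs v.
Proof. by move=> gin; rewrite ffunE (leq_bigmax_seq (F := fun g => g v)). Qed.

Definition Kb gs := \max_(g <- gs) \max_v g v.

Lemma Kb_ge gs g v : g \in gs -> g v <= Kb gs.
Proof.
move=> gin; apply: leq_trans (leq_bigmax v) _.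
exact: (leq_bigmax_seq (F := fun g => \max_v g v)).
Qed.

Definition box gs : seq (mono V) :=
  [seq b <- map (fun f : {ffun V -> 'I_(Kb gs).+1} => [ffun v => nat_of_ord (f v)] : mono V) (enum {ffun V -> 'I_(Kb gs).+1})
   | all (fun g => mirr b g) gs].

Lemma box_ok gs : same_ideal (gen gs) (irr_inter (box gs)).
Proof.
move=> m; split.
- move=> /hasP [g gin d]; apply/allP => b; rewrite mem_filter => /andP [/allP c _].
  exact: mirr_mono d (c g gin).
- apply: contraTT => ng.
  pose b : mono V := [ffun v => if m v < Kb gs then (m v).+1 else 0].
  have bin : b \in box gs.
    rewrite mem_filter; apply/andP; split.
    + apply/allP => g gin; have : ~~ dvdm g m by apply: contra ng => d; apply/hasP; exists g.
      rewrite negb_forall => /existsP [v]; rewrite -ltnNge => lt.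
      apply/existsP; exists v; have := Kb_ge v gin; rewrite ffunE.
      by case: ifP => H1 H2 //=; lia.
    + apply/mapP; exists [ffun v => inord (b v) : 'I_(Kb gs).+1]; first by rewrite mem_enum.
      apply/ffunP => v; rewrite !ffunE inordK //; case: ifP => //; lia.
  apply/allPn; exists b => //; apply/negP => /existsP [v]; rewrite ffunE.
  by case: ifP => _ /=; lia.
Qed.

Lemma prune (I : mideal V) S : same_ideal I (irr_inter S) -> exists S', is_Irr I S'.
Proof.
move: {2}(size S) (leqnn (size S)) => k; elim: k S => [|k IH] S Hs HI.
- exists S; split => // b bin; rewrite leqn0 size_eq0 in Hs; by rewrite (eqP Hs) in bin.
- case: (classic (exists b, b \in S /\ same_ideal I (irr_inter (rem b S)))).
  + move=> [b [bin H]]; apply: (IH (rem b S)) => //.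
    by rewrite size_rem //; move: Hs; case: (size S).
  + move=> nH; exists S; split => // b bin H; apply: nH; by exists b.
Qed.

Lemma Irr_spec gs : is_Irr (gen gs) (Irr (gen gs)).
Proof.
rewrite /Irr; apply: epsilon_spec.
exact: prune (box_ok gs).
Qed.

Lemma dualP gs m :
  gen (dual gs) m <-> ~ gen gs [ffun v => aI gs v - m v].
Proof.
have [H _] := Irr_spec gs; have := H [ffun v => aI gs v - m v].
rewrite /gen /dual has_map; set a := aI gs; move=> E; split.
- move=> /hasP [b bin /forallP d] /E /allP /(_ b bin) /existsP [v].
  have := d v; rewrite !ffunE; case: ifP => //; lia.
- move=> ng; have : ~ irr_inter (Irr (gen gs)) [ffun v => a v - m v] by move=> /E.
  move=> /negP; rewrite /irr_inter => /allPn [b bin nb]; apply/hasP; exists b => //.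
  apply/forallP => v; rewrite ffunE; case: ifP => // bpos.
  apply: contraR nb; rewrite -ltnNge => lt; apply/existsP; exists v; rewrite ffunE bpos /=.
  lia.
Qed.

End Gen.

Section Main.
Variables (n N : nat) (arc : rel 'I_n) (w : 'I_n -> nat).
Hypothesis Hloop : forall i, ~~ arc i i.
Hypothesis Horient : forall i j, arc i j -> ~~ arc j i.
Hypothesis Hwpos : forall i, 0 < w i.
Hypothesis Hsource : forall i, is_source arc i -> w i = 1.
Hypothesis HN : forall i, w i <= N.

Lemma mem_arcs i j : ((i, j) \in arcs arc) = arc i j.
Proof. by rewrite /arcs mem_enum. Qed.

Lemma mem_IDG g : g \in IDG arc w <-> exists i j, arc i j /\ g = edge_mono w i j.
Proof.
split.
- by move=> /mapP [[i j]]; rewrite mem_arcs => H ->; exists i, j.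
- move=> [i [j [H ->]]]; apply/mapP; exists (i, j) => //; by rewrite mem_arcs.
Qed.

Lemma neq_arc i j : arc i j -> i != j.
Proof. by move=> H; apply/eqP => E; move: (Hloop i) H; rewrite {2}E => /negbTE ->. Qed.

Lemma em_i i j : arc i j -> edge_mono w i j i = 1.
Proof.
move=> H; rewrite ffunE eqxx; have := neq_arc H; rewrite eq_sym => /negbTE ->.
by rewrite mul0n.
Qed.

Lemma em_j i j : arc i j -> edge_mono w i j j = w j.
Proof.
move=> H; rewrite ffunE eqxx; have := neq_arc H; rewrite eq_sym => /negbTE ->.
by rewrite mul1n.
Qed.

Lemma em_o i j v : v != i -> v != j -> edge_mono w i j v = 0.
Proof. by move=> /negbTE a /negbTE b; rewrite ffunE a b. Qed.

Lemma em_dvd i j x : arc i j -> dvdm (edge_mono w i j) x = (0 < x i) && (w j <= x j).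
Proof.
move=> H; apply/forallP/andP.
- move=> d; split; [by have := d i; rewrite em_i | by have := d j; rewrite em_j].
- move=> [xi xj] v; case: (eqVneq v i) => [->|vi]; first by rewrite em_i.
  case: (eqVneq v j) => [->|vj]; first by rewrite em_j.
  by rewrite em_o.
Qed.

Lemma em_le i j v : arc i j -> edge_mono w i j v <= w v.
Proof.
move=> H; case: (eqVneq v i) => [->|vi]; first by rewrite em_i.
case: (eqVneq v j) => [->|vj]; first by rewrite em_j.
by rewrite em_o.
Qed.

Lemma genIDG x : gen (IDG arc w) x <-> exists i j, [/\ arc i j, 0 < x i & w j <= x j].
Proof.
split.
- move=> /hasP [g /mem_IDG [i [j [H ->]]]]; rewrite em_dvd // => /andP [a b].
  by exists i, j.
- move=> [i [j [H a b]]]; apply/hasP; exists (edge_mono w i j); first by apply/mem_IDG; exists i, j.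
  by rewrite em_dvd // a b.
Qed.

Lemma em_min i j : arc i j -> edge_mono w i j \in mingens (IDG arc w).
Proof.
move=> H; rewrite mem_filter; apply/andP; split; last by apply/mem_IDG; exists i, j.
apply/hasPn => h /mem_IDG [k [l [H' ->]]]; apply/negP => /andP [d ne].
move: (d); rewrite em_dvd // => /andP [a b].
have kij : (k == i) || (k == j).
  apply: contraLR a; rewrite negb_or => /andP [ki kj]; by rewrite em_o.
have lij : (l == i) || (l == j).
  apply: contraLR b; rewrite negb_or => /andP [li lj]; rewrite em_o // -ltnNge; exact: Hwpos.
have := neq_arc H'; have := Horient H.
move: kij lij ne H' => /orP [] /eqP -> /orP [] /eqP -> //; rewrite ?eqxx //=.
by move=> _ ->.
Qed.

Definition aa := aI (IDG arc w).

Lemma aa_le v : aa v <= w v.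
Proof.
rewrite /aa /aI /lcmm ffunE; apply/bigmax_leqP_seq => g /mingens_sub /mem_IDG [i [j [H ->]]] _.
exact: em_le.
Qed.

Lemma aa_ge_j i j : arc i j -> w j <= aa j.
Proof. by move=> H; rewrite -{1}(em_j H); apply: lcmm_ge; exact: em_min. Qed.

Lemma aa_ge_i i j : arc i j -> w i <= aa i.
Proof.
move=> H; case: (classic (exists h, arc h i)) => [[h Hh]|nh].
- exact: aa_ge_j Hh.
- rewrite Hsource; last first.
    split; first by exists j.
    by move=> h; apply/negP => Hh; apply: nh; exists h.
  by rewrite -(em_i H); apply: lcmm_ge; exact: em_min.
Qed.


Definition RR (m' : mono ('I_n * 'I_N)%type) := exists i j (l z : 'I_N),
  [/\ arc i j, l < w i, 0 < m' (i, l), val z = 0 & 0 < m' (j, z)].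

Lemma genIGD m' : gen (IGD N arc w) m' <-> RR m'.
Proof.
split.
- move=> /hasP [g /flattenP [s /mapP [[i j]]]]; rewrite mem_arcs /= => H -> /mapP [l'].
  rewrite mem_iota => /andP [l1 l2] -> /forallP d.
  have lN : l'.-1 < N by have := HN i; lia.
  have zN : 0 < N by have := HN i; lia.
  exists i, j, (Ordinal lN), (Ordinal zN); split => //=.
  + lia.
  + by have := d (i, Ordinal lN); rewrite ffunE /= !eqxx.
  + by have := d (j, Ordinal zN); rewrite ffunE /= !eqxx orbT.
- move=> [i [j [l [z [H lw p1 z0 p2]]]]]; apply/hasP; exists (gd_edge N i j l.+1).
  + apply/flattenP; exists [seq gd_edge N i j l0 | l0 <- iota 1 (w i)].
      by apply/mapP; exists (i, j); rewrite ?mem_arcs.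
    by apply/mapP; exists l.+1 => //; rewrite mem_iota; lia.
  + apply/forallP => [[v k]]; rewrite ffunE /=.
    case: (boolP ((v == i) && (val k == l))) => [/andP [/eqP -> /eqP E]|_] /=.
      by have -> : k = l by apply: val_inj.
    case: (boolP ((v == j) && (val k == 0))) => [/andP [/eqP -> /eqP E]|_] //=.
    by have -> : k = z by apply: val_inj; rewrite /= E z0.
Qed.

Definition CC (m' : mono ('I_n * 'I_N)%type) (g : mono 'I_n) :=
  exists v (j : 'I_N), j < g v /\ 0 < m' (v, j).

Lemma CC_mono m' g h : dvdm g h -> CC m' g -> CC m' h.
Proof.
move=> /forallP d [v [j [lt p]]]; exists v, j; split => //; exact: leq_trans lt (d v).
Qed.

Lemma polm_le1 (g : mono 'I_n) p : polm N g p <= 1.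
Proof. by rewrite ffunE; case: (_ < _). Qed.

Lemma genP (D : seq (mono 'I_n)) (m' : mono ('I_n * 'I_N)%type) :
  gen (pol N D) [ffun p => aI (pol N D) p - m' p] <->
  exists2 g0, g0 \in mingens D & ~ CC m' g0.
Proof.
set P := pol N D.
have a1 : forall p, aI P p <= 1.
  move=> p; rewrite /aI /lcmm ffunE; apply/bigmax_leqP_seq => g /mingens_sub /mapP [g0 _ ->] _.
  exact: polm_le1.
split.
- move=> /hasP [g /mapP [g0 g0in ->] /forallP d]; exists g0 => // [[v [j [lt p]]]].
  have := d (v, j); have := a1 (v, j); rewrite !ffunE /= lt /=.
  move: (\max_(_ <- _) _) p => M; move: (m' _) => M'; lia.
- move=> [g0 g0in nC].
  have gin : polm N g0 \in P by apply/mapP; exists g0.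
  have [h hin hd] := mingens_below gin; move/forallP: hd => hd.
  apply/hasP; exists h; first exact: mingens_sub hin.
  apply/forallP => p; rewrite ffunE.
  have hle := lcmm_ge p hin; rewrite -/(aI P) in hle.
  case: (posnP (h p)) => [-> //|hp].
  have := hd p; rewrite /polm ffunE; case: (boolP (p.2 < g0 p.1)) => [lt _|_ /=]; last by lia.
  have : ~ (0 < m' p).
    by move=> mp; apply: nC; exists p.1, p.2; case: p mp lt {hd hp hle}.
  lia.
Qed.


Lemma main_same : same_ideal (gen (dual (pol N (dual (IDG arc w))))) (gen (IGD N arc w)).
Proof.
move=> m'; split.
- move=> /dualP H; apply/genIGD; apply: NNPP => nR.
  pose Z v t := [forall l : 'I_N, (l < t) ==> (m' (v, l) == 0)].
  pose u : mono 'I_n := [ffun v => if Z v (w v) then w v else if Z v 1 then 1 else 0].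
  have nCu : ~ CC m' u.
    move=> [v [j [lt p]]]; move: lt; rewrite ffunE.
    case: ifP => [/forallP /(_ j) /implyP Hz lt|_].
      by move: (Hz lt) p => /eqP ->.
    case: ifP => [/forallP /(_ j) /implyP Hz lt|_] //.
    by move: (Hz lt) p => /eqP ->.
  have gu : gen (dual (IDG arc w)) u.
    apply/dualP => /genIDG [i [j [Hij ai wj]]]; rewrite !ffunE in ai wj.
    have ali := aa_le i; have alj := aa_le j; rewrite /aa /aI /lcmm !ffunE in ali alj.
    have wi := Hwpos i; have wjp := Hwpos j.
    move: ai; case: ifP => [_|]; first by lia.
    move=> /negbT; rewrite negb_forall => /existsP [l]; rewrite negb_imply => /andP [lw ml] _.
    case: (boolP (Z j 1)) => Zj.
      by move: wj; rewrite Zj; case: ifP => _; lia.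
    move: Zj; rewrite negb_forall => /existsP [z]; rewrite negb_imply => /andP [z1 mz].
    apply: nR; exists i, j, l, z; split => //; rewrite ?lt0n //; apply/eqP; rewrite -leqn0 -ltnS; exact: z1.
  apply: H; apply/genP.
  move: gu => /hasP [g gin d].
  have [h hin dh] := mingens_below gin.
  exists h => // Ch; apply: nCu; exact: CC_mono (dvdm_trans dh d) Ch.
- move=> /genIGD [i [j [l [z [Hij lw p1 z0 p2]]]]].
  apply/dualP => /genP [g0 g0in]; apply.
  have : gen (dual (IDG arc w)) g0.
    by apply/hasP; exists g0; [exact: mingens_sub g0in | exact: dvdm_refl].
  move=> /dualP ng.
  have agi := aa_ge_i Hij; have agj := aa_ge_j Hij; rewrite /aa in agi agj.
  case: (leqP (aI (IDG arc w) i) (g0 i)) => [le|lt].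
    exists i, l; split => //; exact: leq_trans lw (leq_trans agi le).
  case: (posnP (g0 j)) => [e|pos].
    exfalso; apply: ng; apply/genIDG; exists i, j; split => //; rewrite ffunE ?e ?subn0 ?subn_gt0 //.
  exists j, z; split => //; rewrite z0 //.
Qed.

End Main.

Theorem lemma5p5 (n N : nat) (arc : rel 'I_n) (w : 'I_n -> nat)
  (Hloop : forall i, ~~ arc i i)
  (Horient : forall i j, arc i j -> ~~ arc j i)
  (Hwpos : forall i, 0 < w i)
  (Hsource : forall i, is_source arc i -> w i = 1)
  (HN : forall i, w i <= N) :
  same_ideal (gen (dual (pol N (dual (IDG arc w))))) (gen (IGD N arc w)).
Proof. exact: main_same. Qed.
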